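(* Let $\Gamma$ be a hyperbolic graph such that $\operatorname{rank}\mathcal{F}(\Gamma)=20$, and let $D\ge2$. Then the $2D$-polarized lattice $\mathcal{F}_h(\Gamma)$ can be geometric only if $2D=h_\Gamma^2$.
   Context: Graphs are finite, simple. $\mathbb{Z}\Gamma$ is the lattice freely generated by the vertices of $\Gamma$ with $v^2=-2$, $u\cdot v=1$ if $u,v$ adjacent, $0$ otherwise; $\mathcal{F}(\Gamma)=\mathbb{Z}\Gamma/\ker\mathbb{Z}\Gamma$, where $\ker L$ is the kernel of the form. $\mathcal{F}_h(\Gamma)=(\mathbb{Z}\Gamma\oplus\mathbb{Z}h)/\ker$, with $h^2=2D$ and $v\cdot h=1$ for all vertices $v$. $\Gamma$ is hyperbolic if $\mathbb{Z}\Gamma\otimes\mathbb{R}$ has positive inertia index $1$. The intrinsic polarization $h_\Gamma\in\mathbb{Z}\Gamma\otimes\mathbb{Q}$ satisfies $v\cdot h_\Gamma=1$ for all vertices; $h_\Gamma^2$ is well defined when it exists. A $2D$-polarized lattice $(S,h)$ (nondegenerate, hyperbolic, $h\in S$, $h^2=2D$) is admissible if it contains no vector $e$ with $e^2=-2$, $e\cdot h=0$, and no vector $e$ with $e^2=0$, $e\cdot h=2$; it is geometric if it is admissible and admits a primitive embedding into the $K3$ lattice $\mathbf{L}=\mathbf U^3\oplus\mathbf E_8(-1)^2$ (the unique even unimodular lattice of rank $22$ and signature $-16$). *)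

(* Defs.v *)
From HB Require Import structures.
From mathcomp Require Import all_boot all_order all_algebra.
From mathcomp Require Import Rstruct.
Notation R := Rdefinitions.R.
Set Implicit Arguments. Unset Strict Implicit. Unset Printing Implicit Defensive.
Import Order.TTheory GRing.Theory Num.Theory.
Local Open Scope ring_scope.

(* Lattices given by a (possibly degenerate) Gram matrix on a set of  *)
(* m generators: the lattice is Z^m / ker G, with the induced form.   *)
(* Every element of the lattice is represented by some x : 'cV_m, and  *)
(* all notions below only depend on classes modulo ker G.             *)

Definition bil (m : nat) (G : 'M[int]_m) (x y : 'cV[int]_m) : int :=
  (x^T *m G *m y) 0 0.

Definition posdef (k : nat) (A : 'M[R]_k) : Prop :=
  forall v : 'cV[R]_k, v != 0 -> 0 < (v^T *m A *m v) 0 0.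

(* positive inertia index of G (on Z^m (x) R) equals 1:
   1 is the maximal dimension of a subspace on which the form is
   positive definite. *)
Definition hyperbolic (m : nat) (G : 'M[int]_m) : Prop :=
  let GR := map_mx (fun z : int => z%:~R : R) G in
  (exists A : 'M[R]_(m, 1), posdef (A^T *m GR *m A)) /\
  (forall (k : nat) (A : 'M[R]_(m, k)), posdef (A^T *m GR *m A) -> (k <= 1)%N).

(* 2D-polarized lattice (S,h): S = Z^m/ker G (automatically nondegenerate),
   hyperbolic, h in S, h^2 = 2D *)
Definition polarized (m : nat) (G : 'M[int]_m) (h : 'cV[int]_m) (D : nat) : Prop :=
  hyperbolic G /\ bil G h h = (2 * D)%:Z.

Definition admissible (m : nat) (G : 'M[int]_m) (h : 'cV[int]_m) : Prop :=
  (forall e : 'cV[int]_m, ~ (bil G e e = -2 /\ bil G e h = 0)) /\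
  (forall e : 'cV[int]_m, ~ (bil G e e = 0 /\ bil G e h = 2)).

(* adjacency in the E8 Dynkin diagram on {0..7}: chain 0-1-2-3-4-5-6,
   node 7 attached to node 4 (arms of lengths 4,2,1 from node 4) *)
Definition e8adj (i j : nat) : bool :=
  [|| (i.+1 == j) && (j <= 6)%N, (j.+1 == i) && (i <= 6)%N,
      (i == 4%N) && (j == 7%N) | (i == 7%N) && (j == 4%N)].

(* indices 0..5 : three copies of U (pairs {0,1},{2,3},{4,5});
   indices 6..13 and 14..21 : two copies of E8(-1) *)
Definition k3_entry (i j : nat) : int :=
  if (i < 6)%N && (j < 6)%N then
    (if (i./2 == j./2) && (i != j) then 1 else 0)
  else if (6 <= i < 14)%N && (6 <= j < 14)%N then
    (if i == j then -2 else if e8adj (i - 6) (j - 6) then 1 else 0)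
  else if (14 <= i)%N && (14 <= j)%N then
    (if i == j then -2 else if e8adj (i - 14) (j - 14) then 1 else 0)
  else 0.

Definition K3 : 'M[int]_22 := \matrix_(i < 22, j < 22) k3_entry i j.

(* primitive embedding of Z^m/ker G into the K3 lattice: a Z-linear map
   M : Z^m -> L preserving the form, injective on Z^m/ker G, with
   saturated (primitive) image *)
Definition primitive_embedding_K3 (m : nat) (G : 'M[int]_m) : Prop :=
  exists M : 'M[int]_(22, m),
    [/\ M^T *m K3 *m M = G,
        (forall x : 'cV[int]_m, G *m x = 0 -> M *m x = 0) &
        (forall (y : 'cV[int]_22) (k : int) (x : 'cV[int]_m),
            k != 0 -> k *: y = M *m x -> exists x' : 'cV[int]_m, y = M *m x')].

Definition geometric (m : nat) (G : 'M[int]_m) (h : 'cV[int]_m) (D : nat) : Prop :=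
  [/\ polarized G h D, admissible G h & primitive_embedding_K3 G].

(* a finite simple graph on vertex set 'I_n: adj symmetric, irreflexive *)

Definition gram (n : nat) (adj : rel 'I_n) : 'M[int]_n :=
  \matrix_(i, j) (if i == j then -2 else if adj i j then 1 else 0).

(* rank of F(Gamma) = Z Gamma / ker = rank of the Gram matrix (over Q) *)
Definition rankF (n : nat) (adj : rel 'I_n) : nat :=
  \rank (map_mx (fun z : int => z%:~R : rat) (gram adj)).

Definition hyperbolic_graph (n : nat) (adj : rel 'I_n) : Prop :=
  hyperbolic (gram adj).

(* Gram matrix of Z Gamma (+) Z h, with h the last generator:
   h^2 = 2D, v.h = 1 for all vertices v *)
Definition gram_h (n : nat) (adj : rel 'I_n) (D : nat) : 'M[int]_(n + 1) :=
  block_mx (gram adj) (const_mx 1) (const_mx 1) (const_mx (2 * D)%:Z).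

Definition hvec (n : nat) : 'cV[int]_(n + 1) := col_mx 0 (const_mx 1).

(* intrinsic polarization: h_Gamma in Z Gamma (x) Q with v . h_Gamma = 1 *)
Definition gramQ (n : nat) (adj : rel 'I_n) : 'M[rat]_n :=
  map_mx (fun z : int => z%:~R : rat) (gram adj).

Definition is_intrinsic_pol (n : nat) (adj : rel 'I_n) (x : 'cV[rat]_n) : Prop :=
  gramQ adj *m x = const_mx 1.

Definition sqQ (n : nat) (adj : rel 'I_n) (x : 'cV[rat]_n) : rat :=
  (x^T *m gramQ adj *m x) 0 0.

(* Main.v *)
Require Import Defs.
From HB Require Import structures.
From mathcomp Require Import all_boot all_order all_algebra.
From mathcomp Require Import Rstruct.
From mathcomp Require Import zify.
Import Order.TTheory GRing.Theory Num.Theory.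
Local Open Scope ring_scope.

Definition ev (a : nat) : 'rV[int]_22 := delta_mx 0 (inord a).
Definition Wint : 'M[int]_(3,22) := \matrix_(i < 3) (ev (2 * i) + ev (2 * i).+1).

Lemma entry_rows m p q (A : 'M[int]_(m, p)) (B : 'M_p) (C : 'M_(q,p)) i j :
  (A *m B *m C^T) i j = (row i A *m B *m (row j C)^T) 0 0.
Proof. rewrite -row_mul !mxE; apply eq_bigr => k _; rewrite !mxE //. Qed.

Lemma delta_prod (B : 'M[int]_22) a b :
  (ev a *m B *m (ev b)^T) 0 0 = B (inord a) (inord b).
Proof. by rewrite /ev -rowE trmx_delta -colE !mxE. Qed.

Lemma WK : Wint *m K3 *m Wint^T = 2%:M.
Proof. apply/matrixP => i j. rewrite entry_rows !rowK.
rewrite raddfD /= !mulmxDl !mulmxDr ![((_ + _ : 'M_(1,1)) _ _)]mxE !delta_prod !mxE.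
case: i => [[|[|[|//]]] Hi]; case: j => [[|[|[|//]]] Hj]; rewrite /= !inordK //=.
all: by vm_compute.
Qed.

Notation iR := (fun z : int => z%:~R : R).

Lemma WKR : map_mx iR Wint *m map_mx iR K3 *m (map_mx iR Wint)^T = 2%:M.
Proof.
rewrite map_trmx -!map_mxM WK map_scalar_mx /=. done.
Qed.

Lemma rankW : \rank (map_mx iR Wint) = 3%N.
Proof.
apply/anti_leq; rewrite rank_leq_row /=.
have := mxrankM_maxl (map_mx iR Wint) (map_mx iR K3 *m (map_mx iR Wint)^T).
rewrite mulmxA WKR -scalemx1 mxrank_scale_nz ?mxrank1 //; first [by rewrite pnatr_eq0 | by rewrite eqr_nat | by rewrite gt_eqF // ltr0n ].
Qed.

Lemma rankM_le20 m (G : 'M[int]_m) (M : 'M[int]_(22, m)) :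
  M^T *m K3 *m M = G -> hyperbolic G -> (\rank (map_mx iR M) <= 20)%N.
Proof.
move=> HG [_ Hhyp].
rewrite leqNgt; apply/negP => Hr.
set V := (map_mx iR M)^T.
set W := map_mx iR Wint.
set KR := map_mx iR K3.
have HGR : map_mx iR G = V *m KR *m V^T.
  by rewrite -HG /V /KR trmxK !map_mxM map_trmx.
have Hcap : (2 <= \rank (W :&: V))%N.
  have := mxrank_sum_cap W V.
  have := rank_leq_col (W + V)%MS.
  rewrite rankW mxrank_tr -/V. 
  have : (21 <= \rank V)%N by rewrite /V mxrank_tr.
  lia.
set k := \rank (W :&: V)%MS.
set B := row_base (W :&: V)%MS.
set X := B *m pinvmx V.
have BV : (B <= V)%MS.
  by apply: submx_trans (capmxSr W V); rewrite eq_row_base.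
have BW : (B <= W)%MS.
  by apply: submx_trans (capmxSl W V); rewrite eq_row_base.
have XV : X *m V = B by rewrite /X mulmxKpV.
clearbody X.
suff : (k <= 1)%N by lia.
apply: (Hhyp k X^T) => v vn0.
rewrite trmxK HGR.
have -> : v^T *m (X *m (V *m KR *m V^T) *m X^T) *m v
         = (v^T *m B) *m KR *m (v^T *m B)^T.
  have -> : X *m (V *m KR *m V^T) *m X^T = B *m KR *m B^T.
    by rewrite -XV trmx_mul !mulmxA.
  by rewrite [(v^T *m B)^T]trmx_mul trmxK !mulmxA.
set u := v^T *m B.
have uW : (u <= W)%MS by apply: submx_trans (submxMl _ _) BW.
have un0 : u != 0.
  by rewrite /u mulmx_free_eq0 ?row_base_free // trmx_eq0.
set c := u *m pinvmx W.
have cu : c *m W = u by rewrite /c mulmxKpV.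
have cn0 : c != 0 by apply: contraNneq un0 => c0; rewrite -cu c0 mul0mx.
have WKR' : W *m KR *m W^T = 2%:M := WKR.
have -> : u *m KR *m u^T = c *m (W *m KR *m W^T) *m c^T.
  by rewrite -cu trmx_mul !mulmxA.
rewrite WKR' mul_mx_scalar -scalemxAl mxE mulr_gt0 // mxE.
have [j cj] : exists j, c 0 j != 0.
  apply/existsP; apply: contraNT cn0; rewrite negb_exists => /forallP H.
  apply/eqP/matrixP => i l; rewrite (ord1 i) [RHS]mxE; by move: (H l); rewrite negbK => /eqP.
rewrite (bigD1 j) //= [c^T j 0]mxE -expr2.
apply: ltr_wpDr; first by apply: sumr_ge0 => l _; rewrite [c^T l 0]mxE -expr2 sqr_ge0.
by rewrite exprn_even_gt0 //= cj orbT.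
Qed.

Lemma rank_gramh_le20 n (adj : rel 'I_n) D :
  geometric (gram_h adj D) (hvec n) D ->
  (\rank (map_mx (fun z : int => z%:~R : rat) (gram_h adj D)) <= 20)%N.
Proof.
case=> [[Hhyp _] _ [M [HM _ _]]].
have := @rankM_le20 _ _ _ HM Hhyp.
set HQ := map_mx _ (gram_h adj D).
have -> : \rank HQ = \rank (map_mx iR (gram_h adj D)).
  rewrite -(mxrank_map (ratr : {rmorphism rat -> R}) HQ) /HQ -map_mx_comp.
  by apply: congr1; apply: eq_map_mx => z /=; rewrite ratr_int.
rewrite -HM !map_mxM => H.
apply: leq_trans (mxrankM_maxr _ _) H.
Qed.

Theorem corollary2p9 (n : nat) (adj : rel 'I_n)
    (adj_sym : symmetric adj) (adj_irr : irreflexive adj) (D : nat) :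
  hyperbolic_graph adj ->
  rankF adj = 20%N ->
  (2 <= D)%N ->
  geometric (gram_h adj D) (hvec n) D ->
  (exists hG : 'cV[rat]_n, is_intrinsic_pol adj hG) /\
  (forall hG : 'cV[rat]_n, is_intrinsic_pol adj hG -> sqQ adj hG = (2 * D)%:R).
Proof.
move=> _ Hrk _ Hgeo.
have r20 := @rank_gramh_le20 _ _ _ Hgeo.
set GQ := gramQ adj.
have GQsym : GQ^T = GQ.
  by apply/matrixP => i j; rewrite !mxE eq_sym adj_sym.
set HQ := map_mx _ (gram_h adj D) in r20.
set Top := row_mx GQ (const_mx 1 : 'cV_n).
set Bot := row_mx (const_mx 1 : 'rV_n) (const_mx (2*D)%:R : 'M[rat]_1).
have HQc : HQ = col_mx Top Bot.
  rewrite /HQ /gram_h map_block_mx !map_const_mx /Top /Bot -block_mxEv.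
  by [].
have [TopHQ BotHQ] : (Top <= HQ)%MS /\ (Bot <= HQ)%MS.
  by have := submx_refl HQ; rewrite {1}HQc col_mx_sub => /andP.
have rTop : (20 <= \rank Top)%N.
  have -> : (20 = \rank GQ)%N by rewrite -Hrk.
  have -> : GQ = Top *m col_mx 1%:M 0 by rewrite mul_row_col mulmx1 mulmx0 addr0.
  exact: mxrankM_maxl.
have HQTop : (HQ <= Top)%MS.
  rewrite -(mxrank_leqif_sup TopHQ).2.
  have := mxrankS TopHQ; lia.
have BotTop : (Bot <= Top)%MS := submx_trans BotHQ HQTop.
set y := Bot *m pinvmx Top.
have yTop : y *m Top = Bot by rewrite /y mulmxKpV.
move: yTop; rewrite /Top mul_mx_row => /eq_row_mx [yG y1].
split.
  exists y^T; rewrite /is_intrinsic_pol -/GQ.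
  by rewrite -{1}GQsym -trmx_mul yG trmx_const.
move=> hG; rewrite /is_intrinsic_pol /sqQ -/GQ => H.
rewrite -mulmxA H.
have E : (const_mx 1 : 'rV_n) *m hG = const_mx (2*D)%:R by rewrite -yG -mulmxA H y1.
transitivity (((const_mx 1 : 'rV[rat]_n) *m hG) 0 0).
  by rewrite !mxE; apply: eq_bigr => i _; rewrite !mxE mulrC.
by rewrite E mxE.
Qed.
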